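(* Let $T_0=pD^2+q_0D+r_0$ be a second-order rational operator, let $\phi_1,\dots,\phi_n$ be quasi-rational functions with $T_0\phi_k=\lambda_k\phi_k$ for pairwise distinct constants $\lambda_1,\dots,\lambda_n$, and let $b_1,\dots,b_n$ be nonzero rational functions. For $k=1,\dots,n$ set $\sigma_k=\sum_{j=1}^k (\log b_j)'$, $\upsilon_k=\phi_{(1,\dots,k)}'/\phi_{(1,\dots,k)}$, and $\sigma_0=\upsilon_0=0$; $q_k=q_0+kp'-2p\sigma_k$, $r_k=r_0+kq_0'+\tfrac12k(k-1)p''+\upsilon_kp'-\sigma_k(q_0+kp')+(\sigma_k^2-\sigma_k'+2\upsilon_k')p$, $w_k=\sigma_{k-1}+\upsilon_k-\upsilon_{k-1}$, and define $T_k=pD^2+q_kD+r_k$, $A_k=b_k(D-w_k)$. Then $A_kT_{k-1}=T_kA_k$ for all $k=1,\dots,n$; i.e. $T_0\to T_1\to\cdots\to T_n$ is an $n$-step rational Darboux transformation.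
   Context: $D=d/dz$, primes denote $d/dz$. A rational operator has rational coefficients; a function is quasi-rational if its logarithmic derivative is rational. $\phi_{(i_1,\dots,i_k)}:=\mathrm{Wr}[\phi_{i_1},\dots,\phi_{i_k}]$ denotes the Wronskian determinant. An $n$-step rational Darboux transformation $T_0\to\cdots\to T_n$ means there are first-order rational operators $A_k$ with $A_kT_{k-1}=T_kA_k$. *)

(* Defs.v *)
From HB Require Import structures.
From mathcomp Require Import all_boot all_order all_algebra.
From mathcomp Require Import complex.
From mathcomp Require Import reals.
Set Implicit Arguments. Unset Strict Implicit. Unset Printing Implicit Defensive.
Import Order.TTheory GRing.Theory Num.Theory.
Local Open Scope ring_scope.

(* A derivation D on a field E (playing the role of d/dz). *)
Definition derivation (E : fieldType) (D : E -> E) : Prop :=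
  (forall x y, D (x + y) = D x + D y) /\ (forall x y, D (x * y) = D x * y + x * D y).

Section Diff.
Variables (C : fieldType) (E : fieldType) (D : E -> E) (iota : {poly C} -> E).

Definition rationalE (f : E) : Prop :=
  exists (a c : {poly C}), c != 0 /\ f = iota a / iota c.

Definition quasi_rational (f : E) : Prop := f != 0 /\ rationalE (D f / f).

Definition cst (c : C) : E := iota c%:P.

Definition wronskian (phi : nat -> E) (k : nat) : E :=
  \det (\matrix_(i < k, j < k) iter j D (phi i.+1)).

Definition op2 (p q r f : E) : E := p * D (D f) + q * D f + r * f.

Definition op1 (b w f : E) : E := b * (D f - w * f).

Variables (p q0 r0 : E) (b phi : nat -> E).

Definition sigma (k : nat) : E := \sum_(1 <= j < k.+1) D (b j) / b j.
Definition upsilon (k : nat) : E := D (wronskian phi k) / wronskian phi k.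
Definition qk (k : nat) : E := q0 + k%:R * D p - 2%:R * p * sigma k.
Definition rk (k : nat) : E :=
  r0 + k%:R * D q0 + (k%:R * (k%:R - 1) / 2%:R) * D (D p) + upsilon k * D p
  - sigma k * (q0 + k%:R * D p)
  + (sigma k ^+ 2 - D (sigma k) + 2%:R * D (upsilon k)) * p.
Definition wk (k : nat) : E := sigma k.-1 + upsilon k - upsilon k.-1.

End Diff.

(* Main.v *)
Require Import Defs.
From HB Require Import structures.
From mathcomp Require Import all_boot all_order all_algebra.
From mathcomp Require Import complex.
From mathcomp Require Import reals.
From mathcomp Require Import ring.
Set Implicit Arguments. Unset Strict Implicit. Unset Printing Implicit Defensive.
Import Order.TTheory GRing.Theory Num.Theory.
Local Open Scope ring_scope.



Section Der.
Variables (E : fieldType) (D : E -> E) (hD : derivation D).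

Lemma DD x y : D (x + y) = D x + D y. Proof. by case: hD. Qed.
Lemma DM x y : D (x * y) = D x * y + x * D y. Proof. by case: hD. Qed.
Lemma D0 : D 0 = 0.
Proof. by have := DD 0 0; rewrite addr0 => /eqP; rewrite -subr_eq subrr eq_sym => /eqP. Qed.
Lemma DN x : D (- x) = - D x.
Proof. by apply/eqP; rewrite -addr_eq0 -DD addNr D0. Qed.
Lemma DB x y : D (x - y) = D x - D y. Proof. by rewrite DD DN. Qed.
Lemma D1 : D 1 = 0.
Proof. by have := DM 1 1; rewrite !mulr1 mul1r => /eqP; rewrite -subr_eq subrr eq_sym => /eqP. Qed.
Lemma Dnat m : D m%:R = 0.
Proof. elim: m => [|m IH]; first by rewrite D0. by rewrite -addn1 natrD DD D1 IH addr0. Qed.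
Lemma DV x : D (x^-1) = - D x / x ^+ 2.
Proof.
have [->|x0] := eqVneq x 0; first by rewrite invr0 D0 oppr0 mul0r.
have := DM x x^-1; rewrite divff // D1 => /esym/eqP.
rewrite addrC addr_eq0 => /eqP H.
apply: (mulfI x0); rewrite H; field; exact: x0.
Qed.
Lemma Ddiv x y : D (x / y) = D x / y - x * D y / y ^+ 2.
Proof. by rewrite DM DV; ring. Qed.
Lemma Dsum Inv (r : seq Inv) P (F : Inv -> E) :
  D (\sum_(i <- r | P i) F i) = \sum_(i <- r | P i) D (F i).
Proof. exact: (big_morph D DD D0). Qed.
Lemma iterD0 j : iter j D 0 = 0.
Proof. by elim: j => //= j ->; rewrite D0. Qed.

Lemma ld_prod k (F : nat -> E) : (forall l, (l < k)%N -> F l != 0) ->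
  D (\prod_(l < k) F l) = (\sum_(l < k) D (F l) / F l) * \prod_(l < k) F l.
Proof.
elim: k => [|k IH] H; first by rewrite !big_ord0 D1 mul0r.
rewrite !big_ord_recr /= DM IH; last by move=> l lk; apply: H; exact: ltnW.
have Fk := H k (ltnSn k).
field; exact: Fk.
Qed.

Lemma prod_neq0 k (F : nat -> E) : (forall l, (l < k)%N -> F l != 0) -> \prod_(l < k) F l != 0.
Proof.
move=> H; rewrite prodf_seq_neq0; apply/allP => l _ /=; exact: H.
Qed.

Fixpoint lc (c : E) (j : nat) : nat -> E :=
  match j with
  | 0 => fun l => if l == 0%N then c else 0
  | j'.+1 => fun l => D (lc c j' l) + (if l is l'.+1 then lc c j' l' else 0)
  end.

Lemma lc_hi c j l : (j < l)%N -> lc c j l = 0.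
Proof.
elim: j l => [|j IH] [|l] //=.
move=> jl; rewrite IH ?IH ?D0 ?addr0 //; exact: ltnW.
Qed.

Lemma lc_diag c j : lc c j j = c.
Proof. by elim: j => //= j ->; rewrite lc_hi // D0 add0r. Qed.

Lemma leib c f j m : (j < m)%N ->
  iter j D (c * f) = \sum_(l < m) lc c j l * iter l D f.
Proof.
case: m => [//|m].
elim: j => [|j IH] jm.
  rewrite big_ord_recl /= big1 ?addr0 // => i _.
  by rewrite mul0r.
rewrite iterS IH; last exact: ltnW.
rewrite Dsum.
under eq_bigr do rewrite DM.
rewrite big_split /=.
under [in RHS]eq_bigr do rewrite /= mulrDl.
rewrite big_split /=; congr (_ + _).
rewrite big_ord_recr /= lc_hi // mul0r addr0 big_ord_recl /= mul0r add0r.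
by apply: eq_bigr => i _ /=; rewrite add0n.
Qed.

Lemma eq_wr f g k : (forall i, f i = g i) -> wronskian D f k = wronskian D g k.
Proof. move=> H; rewrite /wronskian; congr (\det _); apply/matrixP=> i j; by rewrite !mxE H. Qed.

Lemma wr_scale c f k : wronskian D (fun i => c * f i) k = c ^+ k * wronskian D f k.
Proof.
rewrite /wronskian.
set M := \matrix_(i < k, j < k) iter j D (f i.+1).
set U := \matrix_(l < k, j < k) lc c j l.
have -> : \matrix_(i < k, j < k) iter j D (c * f i.+1) = M *m U.
  apply/matrixP => i j; rewrite !mxE (leib _ _ (ltn_ord j)).
  by apply: eq_bigr => l _; rewrite !mxE mulrC.
rewrite det_mulmx mulrC; congr (_ * _).
rewrite -det_tr det_trig.
  by rewrite (eq_bigr (fun _ => c)) ?prodr_const ?card_ord // => i _; rewrite !mxE lc_diag.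
apply/forallP => i; apply/forallP => j; apply/implyP => ij.
by rewrite !mxE lc_hi.
Qed.

Lemma iterD1 j : iter j.+1 D 1 = 0.
Proof. by rewrite iterSr D1 iterD0. Qed.

Lemma wr_one h k : h 1%N = 1 -> wronskian D h k.+1 = wronskian D (fun i => D (h i.+1)) k.
Proof.
move=> h1; rewrite /wronskian (expand_det_row _ ord0) big_ord_recl /=.
rewrite big1 ?addr0; last by move=> i _; rewrite !mxE lift0 h1 iterD1 mul0r.
rewrite !mxE h1 /= mul1r /cofactor /= expr0 mul1r.
congr (\det _); apply/matrixP => i j; rewrite !mxE !lift0 /=.
by rewrite -iterS iterSr.
Qed.

Definition Sop (g : nat -> E) : nat -> E := fun i => D (g i.+1) - D (g 1%N) / g 1%N * g i.+1.

Lemma wr_step g k : g 1%N != 0 -> wronskian D g k.+1 = g 1%N * wronskian D (Sop g) k.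
Proof.
move=> a0; set a := g 1%N.
pose h i := g i / a.
have gh : forall i, g i = a * h i by move=> i; rewrite /h mulrC divfK.
rewrite (eq_wr k.+1 gh) wr_scale wr_one; last by rewrite /h divff.
have Sg : forall i, Sop g i = a * D (h i.+1).
  move=> i; rewrite /Sop -/a gh DM; field; exact: a0.
by rewrite (eq_wr k Sg) wr_scale exprS mulrA.
Qed.

Lemma wr_prod g k : (forall l, (l < k)%N -> iter l Sop g 1%N != 0) ->
  wronskian D g k = \prod_(l < k) iter l Sop g 1%N.
Proof.
elim: k g => [|k IH] g H.
  by rewrite big_ord0 /wronskian det_mx00.
rewrite wr_step; last exact: (H 0%N).
rewrite IH; last by move=> l lk; rewrite -iterSr; apply: H.
rewrite big_ord_recl /=; congr (_ * _); apply: eq_bigr => i _.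
by rewrite add0n -iterS iterSr.
Qed.



Lemma intertw (p q r Q R b w : E) : b != 0 ->
  Q = q + D p - 2%:R * p * (D b / b) ->
  R = r + D q - p * D (D b / b) + p * (D b / b) ^+ 2 + 2%:R * p * D w
      - q * (D b / b) - D p * (D b / b) + D p * w ->
  D (p * (D w + w ^+ 2) + q * w + r) = 0 ->
  forall f, op1 D b w (op2 D p q r f) = op2 D p Q R (op1 D b w f).
Proof.
move=> b0 -> -> H f.
rewrite /op1 /op2.
set be := D b / b.
have Db : D b = be * b by rewrite /be divfK.
clearbody be.
rewrite !(DD, DB, DM, DN, expr2) in H *.
have Dr : D r = - (D p * (D w + w * w) + p * (D (D w) + (D w * w + w * D w)) + (D q * w + q * D w)).
  by apply/eqP; rewrite -subr_eq0 opprK addrC addrA addrA; apply/eqP; rewrite -H; ring.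
rewrite Db Dr ?DM ?Db.
ring.
Qed.

End Der.


Section Rat.
Variables (C E : fieldType) (D : E -> E) (hD : derivation D)
  (iota : {rmorphism {poly C} -> E}) (hinj : injective iota)
  (hDiota : forall a : {poly C}, D (iota a) = iota (a^`())).

Notation rat := (rationalE iota).

Lemma iota_neq0 c : c != 0 -> iota c != 0.
Proof. by apply: contra => /eqP; rewrite -(rmorph0 iota) => /hinj ->. Qed.

Lemma rat_iota a : rat (iota a).
Proof. by exists a, 1; split; [exact: oner_neq0 | rewrite rmorph1 divr1]. Qed.

Lemma rat0 : rat 0. Proof. by rewrite -(rmorph0 iota); exact: rat_iota. Qed.
Lemma ratnat m : rat m%:R. Proof. by rewrite -(rmorph_nat iota); exact: rat_iota. Qed.

Lemma ratD x y : rat x -> rat y -> rat (x + y).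
Proof.
move=> [a [c [c0 ->]]] [a' [c' [c0' ->]]].
exists (a * c' + a' * c), (c * c'); split; first by rewrite mulf_neq0.
rewrite rmorphD !rmorphM; field.
by rewrite !iota_neq0.
Qed.

Lemma ratN x : rat x -> rat (- x).
Proof.
move=> [a [c [c0 ->]]]; exists (- a), c; split => //.
by rewrite rmorphN mulNr.
Qed.

Lemma ratB x y : rat x -> rat y -> rat (x - y).
Proof. by move=> hx hy; apply: ratD => //; apply: ratN. Qed.

Lemma ratM x y : rat x -> rat y -> rat (x * y).
Proof.
move=> [a [c [c0 ->]]] [a' [c' [c0' ->]]].
exists (a * a'), (c * c'); split; first by rewrite mulf_neq0.
rewrite !rmorphM; field.
by rewrite !iota_neq0.
Qed.

Lemma ratV x : rat x -> rat (x^-1).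
Proof.
move=> [a [c [c0 ->]]].
have [->|a0] := eqVneq a 0.
  by rewrite rmorph0 mul0r invr0; exact: rat0.
exists c, a; split => //.
by rewrite invfM invrK mulrC.
Qed.

Lemma ratX x m : rat x -> rat (x ^+ m).
Proof.
move=> hx; elim: m => [|m IH]; first by rewrite expr0 -(rmorph1 iota); exact: rat_iota.
by rewrite exprS; apply: ratM.
Qed.

Lemma ratDer x : rat x -> rat (D x).
Proof.
move=> [a [c [c0 ->]]].
rewrite (Ddiv hD) !hDiota.
apply: ratB; apply: ratM; try apply: ratV; try apply: ratM; try apply: ratX;
  exact: rat_iota.
Qed.

Lemma rat_sum k (F : nat -> E) : (forall l, (l < k)%N -> rat (F l)) ->
  rat (\sum_(l < k) F l).
Proof.
elim: k => [|k IH] H; first by rewrite big_ord0; exact: rat0.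
rewrite big_ord_recr /=; apply: ratD; last exact: H.
by apply: IH => l lk; apply: H; exact: ltnW.
Qed.

Lemma Dcst c : D (cst iota c) = 0.
Proof. by rewrite /cst hDiota derivC rmorph0. Qed.

Lemma cst_inj a c : cst iota a = cst iota c -> a = c.
Proof. by move/hinj/polyC_inj. Qed.

End Rat.


Section Main.
Variables (C E : fieldType) (D : E -> E) (hD : derivation D)
  (iota : {rmorphism {poly C} -> E}) (hinj : injective iota)
  (hDiota : forall a : {poly C}, D (iota a) = iota (a^`()))
  (h2 : (2%:R : E) != 0)
  (p q0 r0 : E) (hp : rationalE iota p)
  (hq0 : rationalE iota q0) (hr0 : rationalE iota r0)
  (n : nat) (phi : nat -> E) (lambda : nat -> C) (b : nat -> E)
  (hphi : forall k, (1 <= k <= n)%N -> quasi_rational D iota (phi k))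
  (heig : forall k, (1 <= k <= n)%N ->
            op2 D p q0 r0 (phi k) = cst iota (lambda k) * phi k)
  (hdist : forall i j, (1 <= i)%N -> (i < j)%N -> (j <= n)%N -> lambda i != lambda j)
  (hb : forall k, (1 <= k <= n)%N -> rationalE iota (b k) /\ b k != 0).

Local Notation rat := (rationalE iota).
Local Notation g j := (iter j (Sop D) phi).
Lemma rM x y : rat x -> rat y -> rat (x * y). Proof. exact: ratM. Qed.
Lemma rD x y : rat x -> rat y -> rat (x + y). Proof. exact: ratD. Qed.
Lemma rB x y : rat x -> rat y -> rat (x - y). Proof. exact: ratB. Qed.
Lemma rV x : rat x -> rat (x^-1). Proof. exact: ratV. Qed.
Lemma rX x m : rat x -> rat (x ^+ m). Proof. exact: ratX. Qed.
Lemma rDer x : rat x -> rat (D x). Proof. exact: ratDer. Qed.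
Lemma rN m : rat m%:R. Proof. exact: ratnat. Qed.
Lemma rS k (F : nat -> E) : (forall l, (l < k)%N -> rat (F l)) -> rat (\sum_(l < k) F l).
Proof. exact: rat_sum. Qed.
Lemma Dc c : D (cst iota c) = 0. Proof. exact: Dcst. Qed.

Definition Bp j := \prod_(l < j) b l.+1.
Local Notation Q j := (qk D p q0 b j).
Local Notation Rr j := (rk D p q0 r0 b phi j).

Definition Inv j := forall m, (1 <= m)%N -> (m + j <= n)%N ->
  [/\ g j m != 0, rat (D (g j m) / g j m) &
      op2 D p (Q j) (Rr j) (Bp j * g j m) = cst iota (lambda (m + j)) * (Bp j * g j m)].

Lemma sigma_eq k : sigma D b k = \sum_(l < k) D (b l.+1) / b l.+1.
Proof. by rewrite /sigma big_add1 /= big_mkord. Qed.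

Lemma sigmaS j : sigma D b j.+1 = sigma D b j + D (b j.+1) / b j.+1.
Proof. by rewrite !sigma_eq big_ord_recr. Qed.

Lemma bnz l : (1 <= l <= n)%N -> b l != 0.
Proof. by move=> h; case: (hb h). Qed.

Lemma B_neq0 j : (j <= n)%N -> Bp j != 0.
Proof.
move=> jn; apply: (@prod_neq0 _ j (fun l => b l.+1)) => l lj; apply: bnz.
by rewrite ltnS (leq_trans lj jn).
Qed.

Lemma DB_eq j : (j <= n)%N -> D (Bp j) = sigma D b j * Bp j.
Proof.
move=> jn; rewrite sigma_eq /Bp (@ld_prod _ D hD j (fun l => b l.+1)) // => l lj.
by apply: bnz; rewrite ltnS (leq_trans lj jn).
Qed.

Lemma rat_sigma j : (j <= n)%N -> rat (sigma D b j).
Proof.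
move=> jn; rewrite sigma_eq; apply: (@rS j (fun l => D (b l.+1) / b l.+1)) => l lj.
have hl : (1 <= l.+1 <= n)%N by rewrite ltnS (leq_trans lj jn).
apply: rM; first exact: (rDer (hb hl).1).
exact: (rV (hb hl).1).
Qed.

Lemma ups_eq k : (forall l, (l < k)%N -> g l 1%N != 0) ->
  upsilon D phi k = \sum_(l < k) D (g l 1%N) / g l 1%N.
Proof.
move=> H; rewrite /upsilon (wr_prod hD H) (ld_prod hD H) mulfK //.
exact: (@prod_neq0 _ k (fun l => g l 1%N)).
Qed.

Lemma Q0 : Q 0 = q0.
Proof. rewrite /qk sigma_eq big_ord0; ring. Qed.

Lemma R0 : Rr 0 = r0.
Proof.
rewrite /rk sigma_eq big_ord0 /upsilon /wronskian det_mx00 (D1 hD) (D0 hD).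
rewrite !mul0r (D0 hD); ring.
Qed.

Lemma I0 : Inv 0.
Proof.
move=> m m1; rewrite addn0 => mn /=.
have h : (1 <= m <= n)%N by rewrite m1 mn.
case: (hphi h) => nz r; split => //.
by rewrite /Bp big_ord0 !mul1r Q0 R0 heig.
Qed.


Lemma op2_const y f q r : D y = 0 -> op2 D p q r (y * f) = y * op2 D p q r f.
Proof. move=> Dy; rewrite /op2 !(DD hD, DM hD) !Dy (D0 hD); ring. Qed.

Lemma op1_const y f bb w : D y = 0 -> op1 D bb w (y * f) = y * op1 D bb w f.
Proof. move=> Dy; rewrite /op1 (DM hD) Dy; ring. Qed.

Lemma natS1 j : (j.+1)%:R = j%:R + 1 :> E.
Proof. by rewrite -addn1 natrD. Qed.

Lemma key j : (j < n)%N -> (forall l, (l <= j)%N -> Inv l) ->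
  (wk D b phi j.+1 = sigma D b j + D (g j 1%N) / g j 1%N) /\
  (forall f, op1 D (b j.+1) (wk D b phi j.+1) (op2 D p (Q j) (Rr j) f)
          = op2 D p (Q j.+1) (Rr j.+1) (op1 D (b j.+1) (wk D b phi j.+1) f)).
Proof.
move=> jn HI.
have nz l : (l <= j)%N -> g l 1%N != 0.
  move=> lj; have [||] := HI l lj 1%N => //.
  by rewrite add1n (leq_ltn_trans lj jn).
have ups : upsilon D phi j.+1 = upsilon D phi j + D (g j 1%N) / g j 1%N.
  rewrite !ups_eq ?big_ord_recr // => l lj; apply: nz => //; exact: ltnW.
have wE : wk D b phi j.+1 = sigma D b j + D (g j 1%N) / g j 1%N.
  by rewrite /wk /= ups; ring.
split => //.
have jn' : (j <= n)%N := ltnW jn.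
have bnz1 : b j.+1 != 0 by apply: bnz; rewrite jn.
have g1 := nz j (leqnn j).
have Bnz := B_neq0 jn'.
have [_ _ eig] := HI j (leqnn j) 1%N (leqnn 1) (jn).
set w := wk D b phi j.+1 in wE *.
set psi := Bp j * g j 1%N in eig.
have psinz : psi != 0 by rewrite mulf_neq0.
have Dpsi : D psi = w * psi.
  rewrite wE /psi (DM hD) (DB_eq jn'); field; exact: g1.
have DDpsi : D (D psi) = (D w + w ^+ 2) * psi.
  by rewrite Dpsi (DM hD) Dpsi; ring.
have ric : p * (D w + w ^+ 2) + Q j * w + Rr j = cst iota (lambda (1 + j)%N).
  apply: (mulIf psinz); rewrite -eig /op2 DDpsi Dpsi; ring.
have Hric : D (p * (D w + w ^+ 2) + Q j * w + Rr j) = 0 by rewrite ric Dc.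
apply: (intertw hD) => //.
- by rewrite /qk sigmaS natS1; ring.
- rewrite /rk sigmaS natS1 ups wE /qk.
  set de := D (g j 1%N) / g j 1%N.
  set be := D (b j.+1) / b j.+1.
  set si := sigma D b j.
  set up := upsilon D phi j.
  rewrite !(DD hD, DB hD, DM hD, DN hD, Dnat hD).
  field; rewrite g1 bnz1 h2 andbT /=.
  have Hl : forall l, (l < j)%N -> g l 1%N != 0 by move=> l lj; apply: nz; exact: ltnW.
  by rewrite (wr_prod hD Hl) (@prod_neq0 _ j (fun l => g l 1%N)).
Qed.


Lemma ld_mul u v : u != 0 -> v != 0 -> D (u * v) / (u * v) = D u / u + D v / v.
Proof. move=> u0 v0; rewrite (DM hD); field; by rewrite u0 v0. Qed.

Lemma step j : (j.+1 < n)%N -> (forall l, (l <= j)%N -> Inv l) -> Inv j.+1.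
Proof.
move=> jn HI m m1 mjn.
have jn0 : (j < n)%N := ltnW jn.
have jn' : (j <= n)%N := ltnW jn0.
have [wE key2] := key jn0 HI.
have [g1 rg1 eig1] := HI j (leqnn j) 1%N (leqnn 1) jn0.
have mj : (m.+1 + j <= n)%N by rewrite addSnnS.
have [gm rgm eigm] := HI j (leqnn j) m.+1 (ltn0Sn m) mj.
have Bnz := B_neq0 jn'.
have bnz1 : b j.+1 != 0 by apply: bnz; rewrite jn0.
set u := g j m.+1 in gm rgm eigm.
set v := g j 1%N in g1 rg1 eig1 wE.
have gE : g j.+1 m = D u - D v / v * u by rewrite iterS.
have BE : Bp j.+1 = Bp j * b j.+1 by rewrite /Bp big_ord_recr.
set w := wk D b phi j.+1 in wE key2.
have op1E : op1 D (b j.+1) w (Bp j * u) = Bp j.+1 * g j.+1 m.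
  rewrite /op1 wE (DM hD) (DB_eq jn') BE gE; field; exact: g1.
have xnz : g j.+1 m != 0.
  apply/negP => /eqP x0.
  have Du : D u = D v / v * u by apply/eqP; rewrite -subr_eq0 -gE x0.
  pose y := u / v.
  have Dy : D y = 0 by rewrite /y (Ddiv hD) Du; field.
  have Fy : Bp j * u = y * (Bp j * v) by rewrite /y; field.
  have := eigm; rewrite Fy op2_const // eig1 => /eqP.
  rewrite mulrCA -subr_eq0 -mulrBl mulf_eq0 subr_eq0 => /orP [/eqP ceq|].
    move/(cst_inj hinj): ceq => /eqP; apply/negP.
    apply: hdist => //.
    by rewrite ltn_add2r.
  rewrite mulf_eq0 (negbTE (mulf_neq0 Bnz g1)) orbF => /eqP y0.
  by move: gm; rewrite -(divfK g1 u : y * v = u) y0 mul0r eqxx.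
split => //.
- have thE : g j.+1 m = u * (D u / u - D v / v) by rewrite gE; field; rewrite ?gm ?g1.
  have dnz : D u / u - D v / v != 0.
    by apply: contra xnz => /eqP d0; rewrite thE d0 mulr0.
  rewrite thE ld_mul //.
  apply: rD => //; apply: rM; first by apply: rDer; apply: rB.
  by apply: rV; apply: rB.
- rewrite -op1E -key2 eigm op1_const ?Dc //.
  by rewrite addSnnS.
Qed.

Lemma allI j : (j < n)%N -> forall l, (l <= j)%N -> Inv l.
Proof.
elim: j => [|j IH] jn l lj.
  by move: lj; rewrite leqn0 => /eqP ->; exact: I0.
have IH' := IH (ltnW jn).
move: lj; rewrite leq_eqVlt => /orP [/eqP ->|lj].
  exact: step.
exact: IH'.
Qed.


Lemma rOne : rat 1. Proof. by rewrite -(rmorph1 iota); exact: rat_iota. Qed.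
Lemma rNg x : rat x -> rat (- x). Proof. exact: ratN. Qed.

Ltac ratt := repeat first [ assumption | apply: rN | apply: rOne | apply: rB | apply: rD | apply: rNg
  | apply: rM | apply: rV | apply: rX | apply: rDer ].

Lemma main_k k : (1 <= k <= n)%N ->
    [/\ rationalE iota (qk D p q0 b k),
        rationalE iota (rk D p q0 r0 b phi k),
        rationalE iota (wk D b phi k) &
        forall f : E,
          op1 D (b k) (wk D b phi k) (op2 D p (qk D p q0 b k.-1) (rk D p q0 r0 b phi k.-1) f)
          = op2 D p (qk D p q0 b k) (rk D p q0 r0 b phi k) (op1 D (b k) (wk D b phi k) f)].
Proof.
case: k => [//|j] /= jn.
have HI := allI jn.
have [_ key2] := key jn HI.
have jn' : (j <= n)%N := ltnW jn.
have nz l : (l <= j)%N -> g l 1%N != 0.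
  move=> lj; have [||] := HI l lj 1%N => //.
  by rewrite add1n (leq_ltn_trans lj jn).
have rl l : (l <= j)%N -> rat (D (g l 1%N) / g l 1%N).
  move=> lj; have [||] := HI l lj 1%N => //.
  by rewrite add1n (leq_ltn_trans lj jn).
have rups k : (k <= j.+1)%N -> rat (upsilon D phi k).
  move=> kj; rewrite ups_eq; last by move=> l lk; apply: nz; exact: (leq_trans lk kj).
  apply: (@rS k (fun l => D (g l 1%N) / g l 1%N)) => l lk; apply: rl.
  exact: (leq_trans lk kj).
have r1 := rups j.+1 (leqnn _).
have r2 := rups j (leqnSn _).
have s1 := rat_sigma jn.
have s2 := rat_sigma jn'.
have dp := rDer hp.
split => //.
- by rewrite /qk; ratt.
- by rewrite /rk; ratt.
- by rewrite /wk /=; ratt.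
Qed.

End Main.

Unset Implicit Arguments.

Theorem mainTheorem3
  (R : realType) (E : fieldType) (D : E -> E) (iota : {rmorphism {poly R[i]} -> E})
  (hD : derivation D) (hinj : injective iota)
  (hDiota : forall a : {poly R[i]}, D (iota a) = iota (a^`()))
  (p q0 r0 : E) (hp : rationalE iota p) (hp0 : p != 0)
  (hq0 : rationalE iota q0) (hr0 : rationalE iota r0)
  (n : nat) (phi : nat -> E) (lambda : nat -> R[i]) (b : nat -> E)
  (hphi : forall k, (1 <= k <= n)%N -> quasi_rational D iota (phi k))
  (heig : forall k, (1 <= k <= n)%N ->
            op2 D p q0 r0 (phi k) = cst iota (lambda k) * phi k)
  (hdist : forall i j, (1 <= i)%N -> (i < j)%N -> (j <= n)%N -> lambda i != lambda j)
  (hb : forall k, (1 <= k <= n)%N -> rationalE iota (b k) /\ b k != 0) :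
  forall k, (1 <= k <= n)%N ->
    [/\ rationalE iota (qk D p q0 b k),
        rationalE iota (rk D p q0 r0 b phi k),
        rationalE iota (wk D b phi k) &
        forall f : E,
          op1 D (b k) (wk D b phi k) (op2 D p (qk D p q0 b k.-1) (rk D p q0 r0 b phi k.-1) f)
          = op2 D p (qk D p q0 b k) (rk D p q0 r0 b phi k) (op1 D (b k) (wk D b phi k) f)].
Proof.
move=> k hk.
have h2 : (2%:R : E) != 0.
  rewrite -(rmorph_nat iota) (iota_neq0 hinj) //.
  by rewrite -polyC_natr polyC_eq0 pnatr_eq0.
exact: (main_k hD hinj hDiota h2 hp hq0 hr0 hphi heig hdist hb hk).
Qed.
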